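(* Let $H$ be a finite graph with at least two connected components, and let its vertices be numbered $1,\dots,n$ in the order in which they appear in the canonical adjacency matrix of $H$. Let $A$ be the component containing vertex $1$. Then the vertices of $A$ are exactly $1,2,\dots,|A|$, i.e. all vertices of $A$ appear before all other vertices.
   Context: For an $n\times n$ adjacency matrix $\mathbf{M}$ of a finite simple graph (with respect to some ordering of its vertices), its bit-string is obtained by concatenating the entries strictly above the diagonal column by column, left to right, reading each column from top to bottom. The canonical adjacency matrix of a graph $G$ is the unique adjacency matrix of $G$ (over all orderings of its vertices) whose bit-string is lexicographically greatest. *)

(* Defs.v *)
From mathcomp Require Import all_boot all_order all_algebra all_fingroup.
Set Implicit Arguments. Unset Strict Implicit. Unset Printing Implicit Defensive.

Definition simple_graph n (e : rel 'I_n) : Prop := symmetric e /\ irreflexive e.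

(* Adjacency matrix w.r.t. the vertex ordering s: position k holds vertex s k. *)
Definition adj_mx n (e : rel 'I_n) (s : {perm 'I_n}) : 'M[bool]_n :=
  \matrix_(i, j) e (s i) (s j).

Definition bitstring n (M : 'M[bool]_n) : seq bool :=
  flatten [seq [seq M i j | i : 'I_n <- enum 'I_n & (nat_of_ord i < nat_of_ord j)%N] | j : 'I_n <- enum 'I_n].

Fixpoint lex_le (s t : seq bool) : bool :=
  match s, t with
  | [::], _ => true
  | _ :: _, [::] => false
  | a :: s', b :: t' => (~~ a && b) || ((a == b) && lex_le s' t')
  end.

Definition canonical_adj_mx n (e : rel 'I_n) (M : 'M[bool]_n) : Prop :=
  (exists s : {perm 'I_n}, M = adj_mx e s) /\
  (forall s : {perm 'I_n}, lex_le (bitstring (adj_mx e s)) (bitstring M)).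

(* Main.v *)
Require Import Defs.
From mathcomp Require Import all_boot all_order all_algebra all_fingroup.
From mathcomp Require Import zify.

Lemma count_iota_lt k n : count (fun x => x < k) (iota 0 n) = minn k n.
Proof.
elim: n => [|n IH]; first by rewrite minn0.
rewrite -addn1 iotaD count_cat IH /= add0n addn0.
case: (ltnP n k) => H; rewrite ?H /=; lia.
Qed.

Lemma card_lt n k : k <= n -> #|[pred m : 'I_n | m < k]| = k.
Proof.
move=> Hk; rewrite cardE /enum_mem size_filter /=.
have -> : count [pred m : 'I_n | m < k] (Finite.enum 'I_n)
        = count (fun x => x < k) (map val (enum 'I_n)).
  by rewrite count_map enumT.
by rewrite val_enum_ord count_iota_lt (minn_idPl Hk).
Qed.

Lemma downward_card n (D : {set 'I_n}) :
  (forall a b : 'I_n, a < b -> b \in D -> a \in D) ->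
  forall k : 'I_n, (k \in D) = (k < #|D|).
Proof.
move=> Hd k; apply/idP/idP => H.
  have Hs : [pred m : 'I_n | m < k.+1] \subset D.
    apply/subsetP => m; rewrite inE /= ltnS leq_eqVlt => /orP [/eqP E|E].
      by have -> : m = k by apply: val_inj.
    exact: Hd E H.
  by have := subset_leq_card Hs; rewrite card_lt.
apply/negP => Hn; move: H.
have Hs : D \subset [pred m : 'I_n | m < k].
  apply/subsetP => m Hm; rewrite inE /= ltnNge; apply/negP => Hl.
  move: Hl; rewrite leq_eqVlt => /orP [/eqP E|E].
    have E' : k = m by apply: val_inj.
    by rewrite E' Hm in Hn.
  by rewrite (Hd _ _ E Hm) in Hn.
have := subset_leq_card Hs; rewrite card_lt ?(ltnW (ltn_ord k)) //.
by move=> H1 H2; have := leq_trans H2 H1; rewrite ltnn.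
Qed.

Lemma path_cross (T : finType) (e : rel T) (P : pred T) x p :
  path e x p -> P x -> ~~ P (last x p) ->
  exists u v, [/\ connect e x u, e u v, P u & ~~ P v].
Proof.
elim: p x => [|y p IH] x /=; first by move=> _ ->.
move=> /andP [exy Hp] Px Pl.
case Py: (P y).
  have [u [v [c1 e1 Pu Pv]]] := IH y Hp Py Pl.
  exists u, v; split => //; exact: connect_trans (connect1 exy) c1.
by exists x, y; split => //; rewrite Py.
Qed.

Lemma lex_cat u x y : lex_le (u ++ x) (u ++ y) = lex_le x y.
Proof. by elim: u => //= a u ->; case: a. Qed.

Lemma lex_col cN cM x y :
  size cN = size cM -> all (fun b => b == false) cM -> has id cN ->
  lex_le (cN ++ x) (cM ++ y) = false.
Proof.
elim: cM cN => [|b cM IH] [|a cN] //= [Hs] /andP [/eqP -> Ha].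
by case: a => //= Hh; rewrite IH.
Qed.

Lemma lex_flatten n (M N : 'M[bool]_n) (j : 'I_n) (r : seq 'I_n) :
  sorted (fun a b : 'I_n => a < b) r -> j \in r ->
  (forall a b : 'I_n, a < b -> b < j -> N a b = M a b) ->
  (forall a : 'I_n, a < j -> M a j = false) ->
  (exists2 a : 'I_n, a < j & N a j) ->
  lex_le (flatten [seq [seq N i jj | i : 'I_n <- enum 'I_n & i < jj] | jj <- r])
         (flatten [seq [seq M i jj | i : 'I_n <- enum 'I_n & i < jj] | jj <- r]) = false.
Proof.
move=> Hsort Hj HNM HM [a Ha HN].
elim: r Hsort Hj => [|b r IH] //= Hsort Hj.
case: (eqVneq b j) => [->|Hbj].
  apply: lex_col; first by rewrite !size_map.
    by apply/allP => z /mapP [i]; rewrite mem_filter => /andP [Hi _] ->; rewrite HM.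
  apply/hasP; exists (N a j) => //; apply: map_f; by rewrite mem_filter Ha mem_enum.
have Hjr : j \in r by move: Hj; rewrite in_cons eq_sym (negbTE Hbj).
have Hbj' : b < j.
  have Htr : transitive (fun a b : 'I_n => a < b) by move=> x y z; apply: ltn_trans.
  have := order_path_min Htr Hsort.
  by move=> /allP /(_ _ Hjr).
have -> : [seq N i b | i : 'I_n <- enum 'I_n & i < b] = [seq M i b | i : 'I_n <- enum 'I_n & i < b].
  by apply/eq_in_map => i; rewrite mem_filter => /andP [Hi _]; rewrite HNM.
rewrite lex_cat; apply: IH => //; exact: path_sorted Hsort.
Qed.

Theorem mainTheorem8 (n : nat) (e : rel 'I_n) (s : {perm 'I_n}) :
  simple_graph e ->
  (* H has at least two connected components *)
  (exists u v : 'I_n, ~~ connect e u v) ->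
  (* s numbers the vertices as they appear in the canonical adjacency matrix *)
  canonical_adj_mx e (adj_mx e s) ->
  forall i0 : 'I_n, nat_of_ord i0 = 0%N ->
  forall k : 'I_n,
    (s k \in [set v | connect e (s i0) v]) =
    (k < #|[set v | connect e (s i0) v]|)%N.
Proof.
move=> _ _ [_ Hcan] i0 Hi0 k.
set A := [set v | connect e (s i0) v].
rewrite -(card_preimset A (@perm_inj _ s)).
have E : (s k \in A) = (k \in s @^-1: A) by rewrite !inE.
rewrite {}E.
move: k; apply: downward_card => m k Hmk Hk.
apply/negPn/negP => Hm.
pose D := s @^-1: A.
have Hex : (m \notin D) by [].
case: (@arg_minnP _ m (fun i => i \notin D) (fun i : 'I_n => val i) Hex) => j Hj Hjmin.
have HjA : forall i : 'I_n, i < j -> s i \in A.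
  move=> i Hi; apply/negPn/negP => Hn.
  have : j <= i by apply: Hjmin; rewrite inE.
  by rewrite leqNgt Hi.
have Hi0A : s i0 \in A by rewrite inE connect0.
have Hi0j : i0 < j.
  rewrite Hi0 lt0n; apply/negP => /eqP E.
  have Ej : j = i0 by apply: val_inj; rewrite /= E Hi0.
  by move: Hj; rewrite Ej inE Hi0A.
have Hjk : j < k by apply: leq_ltn_trans (Hjmin _ Hm) Hmk.
have HkA : s k \in A by move: Hk; rewrite inE.
move: (HkA); rewrite inE => /connectP [p Hp Hl].
have P1 : (s^-1)%g (s i0) < j by rewrite permK.
have P2 : ~~ ((s^-1)%g (last (s i0) p) < j) by rewrite -Hl permK -leqNgt ltnW.
have [u [v [cu euv Pu Pv]]] := @path_cross _ e (fun v => (s^-1)%g v < j) _ _ Hp P1 P2.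
set p0 := (s^-1)%g u in Pu; set q := (s^-1)%g v in Pv.
have Hu : s p0 = u by rewrite /p0 permKV.
have Hv : s q = v by rewrite /q permKV.
have HvA : v \in A by rewrite inE (connect_trans cu (connect1 euv)).
have Hqj : j < q.
  rewrite ltn_neqAle leqNgt Pv andbT; apply/negP => /eqP E.
  have Ej : j = q by apply: val_inj.
  by move: Hj; rewrite Ej inE Hv HvA.
pose t := tperm j q.
have Ht : forall a : 'I_n, a < j -> t a = a.
  move=> a Ha; apply: tpermD; apply/negP => /eqP E.
    by move: Ha; rewrite -E ltnn.
  by move: Ha; rewrite -E => /(ltn_trans Hqj); rewrite ltnn.
have := Hcan (t * s)%g.
rewrite /bitstring (@lex_flatten n (adj_mx e s) (adj_mx e (t * s)%g) j) //.
- have := val_enum_ord n => E.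
  have : sorted ltn (map val (enum 'I_n)) by rewrite E iota_ltn_sorted.
  by rewrite sorted_map.
- by rewrite mem_enum.
- move=> a b Hab Hb; rewrite !mxE !permM.
  by rewrite !Ht // (ltn_trans Hab Hb).
- move=> a Ha; rewrite mxE; apply/negP => He.
  move: Hj; rewrite inE; apply/negP/negPn.
  by rewrite inE (connect_trans _ (connect1 He)) //; move: (HjA a Ha); rewrite inE.
- exists p0 => //; rewrite mxE !permM Ht // tpermL Hu Hv //.
Qed.
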